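(* Let $L:\mathbb{R}^d\to\mathbb{R}^{\mathcal{Y}}_+$ be polyhedral and $\gamma:\Delta_{\mathcal{Y}}\rightrightarrows\mathcal{R}$ a finite property. If $L$ indirectly elicits $\gamma$, then there exists $\epsilon_0>0$ such that for all $0<\epsilon\le\epsilon_0$, the general $\epsilon$-thickened link construction for $L,\gamma,\epsilon,\|\cdot\|_\infty$ produces a link, i.e., the link envelope satisfies $\Psi(u)\neq\emptyset$ for all $u\in\mathbb{R}^d$.
   Context: $\mathcal{Y}$ is a finite label set, $\Delta_{\mathcal{Y}}$ the simplex, $\mathbb{R}^{\mathcal{Y}}_+$ the nonnegative orthant. A property $\gamma:\Delta_{\mathcal{Y}}\rightrightarrows\mathcal{R}$ maps each $p$ to a nonempty subset of $\mathcal{R}$; finite if $\mathcal{R}$ finite; level sets $\gamma_r=\{p:r\in\gamma(p)\}$. $L$ polyhedral: each coordinate $u\mapsto L(u)_y$ is a max of finitely many affine functions; it elicits $\Gamma(p)=\arg\min_u\langle p,L(u)\rangle$. $L$ indirectly elicits $\gamma$ if for all $u$ there is $r$ with $\Gamma_u\subseteq\gamma_r$. General construction for $L,\gamma,\epsilon,\|\cdot\|$: $\mathcal{U}=\{\Gamma(p):p\in\Delta_{\mathcal{Y}}\}$, $\Gamma_U=\{p:\Gamma(p)=U\}$, $R_U=\{r\in\mathcal{R}:\Gamma_U\subseteq\gamma_r\}$; initialize $\Psi(u)=\mathcal{R}$; for each $U\in\mathcal{U}$ and each $u$ with $\inf_{u^*\in U}\|u^*-u\|<\epsilon$ set $\Psi(u)\leftarrow\Psi(u)\cap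 R_U$; the construction produces a link if $\Psi(u)\neq\emptyset$ for all $u$, and the links produced are the $\psi$ with $\psi(u)\in\Psi(u)$ for all $u$. *)

(* Defs.v *)
From HB Require Import structures.
From mathcomp Require Import all_boot all_order all_algebra.
From mathcomp Require Import boolp classical_sets reals.
Set Implicit Arguments. Unset Strict Implicit. Unset Printing Implicit Defensive.
Import Order.TTheory GRing.Theory Num.Theory.
Local Open Scope ring_scope.
Local Open Scope classical_set_scope.

Section Defs.
Variables (R : realType) (d : nat) (Y Rep : finType).

Definition vec := 'I_d -> R.

Definition linf_dist (u v : vec) : R := \big[Num.max/0]_(i < d) `|u i - v i|.

Definition simplex (p : Y -> R) : Prop :=
  (forall y, 0 <= p y) /\ \sum_(y : Y) p y = 1.

(* each coordinate of L is a max of finitely many (at least one) affine functions *)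
Definition polyhedral (L : vec -> Y -> R) : Prop :=
  forall y : Y, exists (k : nat) (a : 'I_k.+1 -> vec) (b : 'I_k.+1 -> R),
    forall u : vec,
      (forall j, \sum_(i < d) a j i * u i + b j <= L u y) /\
      (exists j, L u y = \sum_(i < d) a j i * u i + b j).

Definition nonneg_loss (L : vec -> Y -> R) : Prop := forall u y, 0 <= L u y.

Definition is_property (gamma : (Y -> R) -> {set Rep}) : Prop :=
  forall p, simplex p -> exists r : Rep, r \in gamma p.

Definition exp_loss (L : vec -> Y -> R) (p : Y -> R) (u : vec) : R :=
  \sum_(y : Y) p y * L u y.

Definition Gamma (L : vec -> Y -> R) (p : Y -> R) : set vec :=
  [set u | forall u' : vec, exp_loss L p u <= exp_loss L p u'].

Definition Gamma_level (L : vec -> Y -> R) (u : vec) : set (Y -> R) :=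
  [set p | simplex p /\ Gamma L p u].

Definition gamma_level (gamma : (Y -> R) -> {set Rep}) (r : Rep) : set (Y -> R) :=
  [set p | simplex p /\ r \in gamma p].

Definition indirectly_elicits (L : vec -> Y -> R) (gamma : (Y -> R) -> {set Rep}) : Prop :=
  forall u : vec, exists r : Rep, Gamma_level L u `<=` gamma_level gamma r.

Definition calU (L : vec -> Y -> R) : set (set vec) :=
  [set U | exists p, simplex p /\ Gamma L p = U].

Definition Gamma_U (L : vec -> Y -> R) (U : set vec) : set (Y -> R) :=
  [set p | simplex p /\ Gamma L p = U].

Definition R_U (L : vec -> Y -> R) (gamma : (Y -> R) -> {set Rep}) (U : set vec) : set Rep :=
  [set r | Gamma_U L U `<=` gamma_level gamma r].

(* inf_{u* in U} ||u* - u||_oo < eps  (with inf over empty set = +oo) *)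
Definition near_set (eps : R) (U : set vec) (u : vec) : Prop :=
  exists2 us, U us & linf_dist us u < eps.

Definition Psi (L : vec -> Y -> R) (gamma : (Y -> R) -> {set Rep}) (eps : R) (u : vec)
  : set Rep :=
  [set r | forall U, calU L U -> near_set eps U u -> R_U L gamma U r].

Definition produces_link (L : vec -> Y -> R) (gamma : (Y -> R) -> {set Rep}) (eps : R) : Prop :=
  forall u : vec, Psi L gamma eps u !=set0.

End Defs.

(* Main.v *)
Require Import Defs.
From HB Require Import structures.
From mathcomp Require Import all_boot all_order all_algebra.
From mathcomp Require Import boolp classical_sets reals.
From mathcomp Require Import ring lra.
Import Order.TTheory GRing.Theory Num.Theory.
Local Open Scope ring_scope.

Definition dotn {R : realType} (n : nat) (a x : nat -> R) : R :=
  \sum_(i < n) a i * x i.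

Lemma dotn_recr {R : realType} n (a x : nat -> R) :
  dotn n.+1 a x = dotn n a x + a n * x n.
Proof. by rewrite /dotn big_ord_recr. Qed.

Lemma dotn_lin {R : realType} n (al be : R) (p q x : nat -> R) :
  dotn n (fun k => al * p k + be * q k) x = al * dotn n p x + be * dotn n q x.
Proof.
rewrite /dotn !mulr_sumr -big_split; apply: eq_bigr => i _ /=.
by rewrite mulrDl !mulrA.
Qed.

Lemma dotn_ext {R : realType} n (a x y : nat -> R) :
  (forall k, (k < n)%N -> x k = y k) -> dotn n a x = dotn n a y.
Proof. by move=> H; apply: eq_bigr => i _; rewrite H. Qed.

Lemma sep_lemma {R : realType} (I : finType) (Pl Pu : pred I) (fl fu : I -> R) :
  (forall i j, Pl i -> Pu j -> fl i <= fu j) ->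
  exists t, (forall i, Pl i -> fl i <= t) /\ (forall j, Pu j -> t <= fu j).
Proof.
move=> H.
case: (pselect (exists i0, Pl i0)) => [[i0 Hi0]|Hno].
  exists (\big[Num.max/fl i0]_(i | Pl i) fl i); split.
    by move=> i Hi; rewrite (bigD1 i) //= le_max lexx.
  move=> j Hj; apply: (big_ind (fun x => x <= fu j)) => //.
  - exact: H.
  - by move=> x y Hx Hy; rewrite ge_max Hx Hy.
  - by move=> i Hi; apply: H.
exists (\big[Num.min/0]_(j | Pu j) fu j); split.
  by move=> i Hi; exfalso; apply: Hno; exists i.
by move=> j Hj; rewrite (bigD1 j) //= ge_min lexx.
Qed.

Lemma uniform_small {R : realType} (I : finType) (P : I -> R -> Prop) :
  (forall i, exists2 e, 0 < e & forall t, 0 < t -> t <= e -> P i t) ->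
  exists2 e, 0 < e & forall i t, 0 < t -> t <= e -> P i t.
Proof.
move=> H.
have [f Hf] := @choice _ _ (fun i => (fun e => 0 < e /\ forall t, 0 < t -> t <= e -> P i t)) 
  ltac:(by move=> i; case: (H i) => e he he'; exists e).
exists (\big[Num.min/1]_i f i).
  apply: (big_ind (fun x => 0 < x)) => //.
    by move=> x y Hx Hy; rewrite lt_min Hx Hy.
  by move=> i _; case: (Hf i).
move=> i t Ht Hte; case: (Hf i) => _ Hi; apply: Hi => //.
apply: (le_trans Hte); by rewrite (bigD1 i) //= ge_min lexx.
Qed.


Lemma robust {R : realType} (n : nat) : forall (I : finType) (a : I -> nat -> R) (b : I -> R),
  (forall dl, 0 < dl -> exists x, forall i, dotn n (a i) x <= b i + dl) ->
  exists x, forall i, dotn n (a i) x <= b i.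
Proof.
elim: n => [|n IH] I a b H.
  exists (fun _ => 0) => i; rewrite /dotn big_ord0.
  apply/ler_addgt0Pr => e he; have [x Hx] := H e he.
  by have := Hx i; rewrite /dotn big_ord0.
pose c i := a i n.
pose a' (k : (I + I * I)%type) : nat -> R :=
  match k with
  | inl i => if c i == 0 then a i else (fun _ => 0)
  | inr (p, q) => if (0 < c p) && (c q < 0) then (fun k => - c q * a p k + c p * a q k)
                  else (fun _ => 0)
  end.
pose b' (k : (I + I * I)%type) : R :=
  match k with
  | inl i => if c i == 0 then b i else 0
  | inr (p, q) => if (0 < c p) && (c q < 0) then - c q * b p + c p * b q else 0
  end.
have a'n k : a' k n = 0.
  case: k => [i|[p q]] /=; first by case: eqP.
  by case: ifP => // _; rewrite /c; ring.
have zero_dot x : dotn n (fun _ => 0) x = 0.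
  by rewrite /dotn big1 // => i _; rewrite mul0r.
have [x' Hx'] : exists x, forall k, dotn n (a' k) x <= b' k.
  apply: IH => dl hdl.
  pose M := 1 + \sum_i `|c i|.
  have M1 : 1 <= M by rewrite /M lerDl sumr_ge0.
  have cM i : `|c i| <= M.
    rewrite /M (bigD1 i) //= addrCA lerDl addr_ge0 // sumr_ge0 //.
  pose d1 := dl / (M + M).
  have MM : 0 < M + M by lra.
  have d1pos : 0 < d1 by rewrite /d1 divr_gt0.
  have d1M : d1 * (M + M) = dl by rewrite /d1 mulfVK // gt_eqF.
  have [x Hx] := H d1 d1pos.
  exists x => -[i|[p q]] /=.
    case: eqP => [ci0|_]; last by rewrite zero_dot ?addr0 ?add0r ltW.
    have := Hx i; rewrite dotn_recr -/(c i) ci0 mul0r addr0 => h.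
    apply: (le_trans h); rewrite lerD2l.
    rewrite -d1M ler_peMr ?(ltW d1pos) //; lra.
  case: ifP => [/andP [cp cq]|_]; last by rewrite zero_dot ?addr0 ?add0r ltW.
  have hp := Hx p; have hq := Hx q.
  rewrite !dotn_recr -/(c p) -/(c q) in hp hq.
  have := cM p; have := cM q; rewrite (gtr0_norm cp) (ltr0_norm cq) => hMq hMp.
  have : - c q * (b p + d1 - c p * x n) + c p * (b q + d1 - c q * x n) 
         <= - c q * b p + c p * b q + dl.
    rewrite -d1M /c. 
    have : (- c q + c p) * d1 <= d1 * (M + M).
      rewrite mulrC ler_wpM2l ?(ltW d1pos) //; lra.
    rewrite /c; nra.
  move=> hsum.
  have e1 : - c q * (dotn n (a p) x) <= - c q * (b p + d1 - c p * x n).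
    by apply: ler_wpM2l; lra.
  have e2 : c p * (dotn n (a q) x) <= c p * (b q + d1 - c q * x n).
    by apply: ler_wpM2l; lra.
  rewrite dotn_lin; lra.
pose rest i := b i - dotn n (a i) x'.
have [t [Ht1 Ht2]] : exists t, (forall i, c i < 0 -> rest i / c i <= t) /\
     (forall j, 0 < c j -> t <= rest j / c j).
  apply: (@sep_lemma R I (fun i => c i < 0) (fun i => 0 < c i)).
  move=> q p /= cq cp.
  have := Hx' (inr (p, q)); rewrite /= cp cq /= dotn_lin /rest.
  set dp := dotn n (a p) x'; set dq := dotn n (a q) x'.
  set up := (b p - dp) / c p; set lq := (b q - dq) / c q.
  have eup : b p - dp = c p * up by rewrite /up mulrC divfK // gt_eqF.
  have elq : b q - dq = c q * lq by rewrite /lq mulrC divfK // lt_eqF.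
  have pos : 0 < c p * (- c q) by rewrite mulr_gt0 // oppr_gt0.
  move=> h. nra.
exists (fun k => if k == n then t else x' k) => i.
rewrite dotn_recr eqxx -/(c i).
rewrite (@dotn_ext R n (a i) _ x'); last by move=> k kn; rewrite ltn_eqF.
case: (ltgtP (c i) 0) => ci.
- have := Ht1 i ci; rewrite /rest.
  set u := (b i - dotn n (a i) x') / c i.
  have eu : b i - dotn n (a i) x' = c i * u by rewrite /u mulrC divfK // lt_eqF.
  move=> h; nra.
- have := Ht2 i ci; rewrite /rest.
  set u := (b i - dotn n (a i) x') / c i.
  have eu : b i - dotn n (a i) x' = c i * u by rewrite /u mulrC divfK // gt_eqF.
  move=> h; nra.
- have := Hx' (inl i); rewrite /= ci eqxx mul0r addr0; done.
Qed.


Lemma argmax_ex {R : realType} (I : finType) (P : pred I) (F : I -> R) i0 :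
  P i0 -> exists i, P i /\ forall j, P j -> F j <= F i.
Proof.
move=> Pi0.
have [i [Pi Hm]] : exists i, P i /\ \big[Num.max/F i0]_(j | P j) F j = F i.
  apply: (big_ind (fun x => exists i, P i /\ x = F i)).
  - by exists i0.
  - move=> x y [i [Pi ->]] [j [Pj ->]].
    by case: (leP (F i) (F j)) => h; [exists j | exists i].
  - by move=> i Pi; exists i.
exists i; split => // j Pj; by rewrite -Hm (bigD1 j) //= le_max lexx.
Qed.

Definition aff {R : realType} {d : nat} {Y : finType} {K : nat}
  (A : Y -> 'I_K.+1 -> vec R d) (B : Y -> 'I_K.+1 -> R) (y : Y) (j : 'I_K.+1) (u : vec R d) : R :=
  \sum_(i < d) A y j i * u i + B y j.

Definition Act {R : realType} {d : nat} {Y : finType} {K : nat} (L : vec R d -> Y -> R)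
  (A : Y -> 'I_K.+1 -> vec R d) (B : Y -> 'I_K.+1 -> R) (u : vec R d) : {set Y * 'I_K.+1} :=
  [set yj | aff A B yj.1 yj.2 u == L u yj.1].

Lemma aff_lin {R : realType} {d : nat} {Y : finType} {K : nat}
  (A : Y -> 'I_K.+1 -> vec R d) (B : Y -> 'I_K.+1 -> R) y j (w h : vec R d) t :
  aff A B y j (fun i => w i + t * h i) = aff A B y j w + t * \sum_(i < d) A y j i * h i.
Proof.
rewrite /aff mulr_sumr addrAC -big_split /=; congr (_ + _); apply: eq_bigr => i _.
by rewrite mulrDr mulrCA.
Qed.

Lemma gamma_mono {R : realType} {d : nat} {Y : finType} {K : nat} (L : vec R d -> Y -> R)
  (A : Y -> 'I_K.+1 -> vec R d) (B : Y -> 'I_K.+1 -> R)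
  (HL : forall y u, (forall j, aff A B y j u <= L u y) /\ exists j, L u y = aff A B y j u)
  (p : Y -> R) (hp : forall y, 0 <= p y) (w u : vec R d) :
  Gamma L p w -> Act L A B w \subset Act L A B u -> Gamma L p u.
Proof.
move=> Gw /fintype.subsetP sub v.
case: (leP (exp_loss L p u) (exp_loss L p v)) => // hlt; exfalso.
pose h i := v i - u i.
pose dh y j := \sum_(i < d) A y j i * h i.
have [jy Hjy] := @choice Y 'I_K.+1 (fun y j => (y, j) \in Act L A B w /\
     forall j', (y, j') \in Act L A B w -> dh y j' <= dh y j)
  ltac:(move=> y; have [_ [j0 Hj0]] := HL y w;
        have := @argmax_ex R _ (fun j => (y, j) \in Act L A B w) (dh y) j0;
        rewrite inE /= Hj0 eqxx => /(_ isT) [j [Pj Hj]]; by exists j).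
pose phi := \sum_y p y * dh y (jy y).
have c1 : exp_loss L p u + phi <= exp_loss L p v.
  rewrite /exp_loss /phi -big_split /=; apply: ler_sum => y _.
  rewrite -mulrDr; apply: ler_wpM2l => //.
  have [Hy _] := HL y v; apply: le_trans (Hy (jy y)).
  have [Hact _] := Hjy y; have := sub _ Hact; rewrite inE /= => /eqP <-.
  have -> : v = (fun i => u i + 1 * h i).
    by apply: funext => i; rewrite mul1r /h addrC subrK.
  by rewrite aff_lin mul1r.
have phineg : phi < 0 by lra.
have Hsmall : forall yj : Y * 'I_K.+1, exists2 e, 0 < e & forall t, 0 < t -> t <= e ->
   aff A B yj.1 yj.2 (fun i => w i + t * h i) <= L w yj.1 + t * dh yj.1 (jy yj.1).
  case=> y j /=.
  case: (boolP ((y, j) \in Act L A B w)) => Hin.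
  - exists 1 => // t tpos _; rewrite aff_lin.
    move: (Hin); rewrite inE /= => /eqP ->; rewrite lerD2l ler_wpM2l ?(ltW tpos) //.
    by have [_ Hm] := Hjy y; apply: Hm.
  - have [Hle _] := HL y w.
    have gap : 0 < L w y - aff A B y j w.
      rewrite subr_gt0 lt_neqAle Hle andbT; apply: contraNneq Hin => e.
      by rewrite inE /= e.
    pose D := dh y j - dh y (jy y).
    have Dn : 0 <= `|D| by [].
    have DD : D <= `|D| by exact: ler_norm.
    exists ((L w y - aff A B y j w) / (`|D| + 1)).
      by rewrite divr_gt0 // ltr_wpDl.
    move=> t tpos tle; rewrite aff_lin.
    have e1 : (L w y - aff A B y j w) / (`|D| + 1) * (`|D| + 1) = L w y - aff A B y j w.
      by rewrite mulfVK // gt_eqF // ltr_wpDl.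
    move: tle e1; set e := (_ / _) => tle e1.
    rewrite -/(dh y j).
    have : t * D <= L w y - aff A B y j w by nra.
    rewrite /D; lra.
have [t0 t0pos Ht0] := @uniform_small R _
  (fun yj t => aff A B yj.1 yj.2 (fun i => w i + t * h i) <=
               L w yj.1 + t * dh yj.1 (jy yj.1)) Hsmall.
have := Gw (fun i => w i + t0 * h i).
rewrite /exp_loss.
have : \sum_y p y * L (fun i => w i + t0 * h i) y <= \sum_y p y * L w y + t0 * phi.
  rewrite /phi mulr_sumr -big_split /=; apply: ler_sum => y _.
  rewrite mulrCA -mulrDr; apply: ler_wpM2l => //.
  have [_ [j ->]] := HL y (fun i => w i + t0 * h i).
  exact: (Ht0 (y, j) t0 t0pos (lexx _)).
have : t0 * phi < 0 by rewrite pmulr_rlt0.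
rewrite /exp_loss; lra.
Qed.


Definition extv {R : realType} {d : nat} (f : 'I_d -> R) : nat -> R :=
  fun n => if @insub nat (fun k => k < d)%N 'I_d n is Some i then f i else 0.

Lemma dotn_extv {R : realType} {d : nat} (f : 'I_d -> R) (x : nat -> R) :
  dotn d (extv f) x = \sum_(i < d) f i * x i.
Proof. by apply: eq_bigr => i _; rewrite /extv valK. Qed.

Lemma linf_ge {R : realType} {d : nat} (w u : vec R d) i : `|w i - u i| <= linf_dist w u.
Proof. by rewrite /linf_dist (bigD1 i) //= le_max lexx. Qed.

Lemma linf_ge0 {R : realType} {d : nat} (w u : vec R d) : 0 <= linf_dist w u.
Proof.
rewrite /linf_dist; apply: (big_ind (fun x => 0 <= x)) => //.
by move=> x y hx _; rewrite le_max hx.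
Qed.

Lemma uniform_eps {R : realType} {d : nat} {Y : finType} {K : nat} (L : vec R d -> Y -> R)
  (A : Y -> 'I_K.+1 -> vec R d) (B : Y -> 'I_K.+1 -> R)
  (HL : forall y u, (forall j, aff A B y j u <= L u y) /\ exists j, L u y = aff A B y j u) :
  exists2 eps0, 0 < eps0 & forall u : vec R d, exists us : vec R d,
    forall w, linf_dist w u < eps0 -> Act L A B w \subset Act L A B us.
Proof.
pose feas (T : {set Y * 'I_K.+1}) := exists x : vec R d,
  forall y j j', (y, j) \in T -> aff A B y j' x <= aff A B y j x.
have feas_act (T : {set Y * 'I_K.+1}) (x : vec R d) : (forall y j j', (y, j) \in T -> aff A B y j' x <= aff A B y j x) ->
    T \subset Act L A B x.
  move=> Hx; apply/fintype.subsetP => -[y j] Hyj; rewrite inE /=.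
  have [Hle [j0 Hj0]] := HL y x.
  by rewrite eq_le Hle /= Hj0 Hx.
have act_le (w : vec R d) y j j' : (y, j) \in Act L A B w -> aff A B y j' w <= aff A B y j w.
  rewrite inE /= => /eqP ->; by have [Hle _] := HL y w.
have Hsmall : forall T : {set Y * 'I_K.+1}, exists2 e, 0 < e & forall t, 0 < t -> t <= e ->
   ~ feas T -> ~ (exists u : vec R d, forall yj, yj \in T ->
        exists w, linf_dist w u < t /\ yj \in Act L A B w).
  move=> T.
  case: (pselect (feas T)) => [fT|nfT]; first by exists 1.
  pose rowv (k : (Y * 'I_K.+1) * 'I_K.+1) : vec R d :=
    fun i => if k.1 \in T then A k.1.1 k.2 i - A k.1.1 k.1.2 i else 0.
  pose bk (k : (Y * 'I_K.+1) * 'I_K.+1) : R :=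
    if k.1 \in T then B k.1.1 k.1.2 - B k.1.1 k.2 else 0.
  have [dl dlpos Hdl] : exists2 dl, 0 < dl & forall x : nat -> R,
      ~ (forall k, dotn d (extv (rowv k)) x <= bk k + dl).
    case: (pselect (exists2 dl, 0 < dl & forall x : nat -> R,
      ~ (forall k, dotn d (extv (rowv k)) x <= bk k + dl))) => // Hn; exfalso.
    apply: nfT.
    have [x Hx] : exists x : nat -> R, forall k, dotn d (extv (rowv k)) x <= bk k.
      apply: robust => dl dlpos.
      case: (pselect (exists x : nat -> R, forall k, dotn d (extv (rowv k)) x <= bk k + dl)) => // nx.
      exfalso; apply: Hn; exists dl => // x Hx; apply: nx; by exists x.
    exists (fun i => x i) => y j j' Hyj.
    have := Hx ((y, j), j'); rewrite dotn_extv /rowv /bk /= Hyj /aff.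
    move=> h.
    have E : \sum_(i < d) (A y j' i - A y j i) * x i =
        \sum_(i < d) A y j' i * x i - \sum_(i < d) A y j i * x i.
      by rewrite -sumrB; apply: eq_bigr => i _; rewrite mulrBl.
    lra.
  pose C := 1 + \sum_k \sum_(i < d) `|rowv k i|.
  have C1 : 1 <= C.
    by rewrite /C lerDl; apply: sumr_ge0 => k _; apply: sumr_ge0 => i _; apply: normr_ge0.
  have Ck k : \sum_(i < d) `|rowv k i| <= C.
    rewrite /C (bigD1 k) //= addrCA lerDl addr_ge0 //; apply: sumr_ge0 => k' _;
      apply: sumr_ge0 => i _; apply: normr_ge0.
  exists (dl / C); first by rewrite divr_gt0 //; lra.
  move=> t tpos tle _ [u Hu].
  apply: (Hdl (extv u)) => -[[y j] j'].
  rewrite dotn_extv /bk /rowv /=.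
  case: (boolP ((y, j) \in T)) => Hyj; last first.
    by rewrite big1 ?add0r ?ltW // => i _; rewrite mul0r.
  have [w [hw Hact]] := Hu _ Hyj.
  have hle := act_le w y j j' Hact; rewrite /aff in hle.
  have Hdist : \sum_(i < d) (A y j' i - A y j i) * extv u i <= 
      \sum_(i < d) (A y j' i - A y j i) * w i + 
      (\sum_(i < d) `|A y j' i - A y j i|) * linf_dist w u.
    rewrite mulr_suml -big_split /=; apply: ler_sum => i _.
    rewrite /extv valK.
    have := linf_ge w u i; rewrite distrC => hi.
    have : (A y j' i - A y j i) * (u i - w i) <= `|A y j' i - A y j i| * linf_dist w u.
      apply: le_trans (ler_norm _) _; rewrite normrM; apply: ler_wpM2l => //.
    rewrite mulrBr; lra.
  have Hsum : \sum_(i < d) (A y j' i - A y j i) * w i <= B y j - B y j'.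
    have E : \sum_(i < d) (A y j' i - A y j i) * w i =
        \sum_(i < d) A y j' i * w i - \sum_(i < d) A y j i * w i.
      by rewrite -sumrB; apply: eq_bigr => i _; rewrite mulrBl.
    lra.
  have := Ck ((y, j), j'); rewrite /rowv /= Hyj => hC.
  have hd0 := linf_ge0 w u.
  have : (\sum_(i < d) `|A y j' i - A y j i|) * linf_dist w u <= dl.
    have e1 : dl / C * C = dl by rewrite mulfVK // gt_eqF //; lra.
    have : linf_dist w u <= dl / C by apply: ltW; apply: lt_le_trans tle.
    have : 0 <= \sum_(i < d) `|A y j' i - A y j i| by apply: sumr_ge0.
    move: e1; set e := dl / C; nra.
  lra.
have [eps0 e0pos He0] := @uniform_small R _ (fun T t => ~ feas T -> ~ (exists u : vec R d, forall yj, yj \in T ->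
        exists w, linf_dist w u < t /\ yj \in Act L A B w)) Hsmall.
exists eps0 => // u.
pose T := [set yj | `[< exists w, linf_dist w u < eps0 /\ yj \in Act L A B w >] ].
case: (pselect (feas T)) => [[x Hx]|nfT]; last first.
  exfalso; apply: (He0 T eps0 e0pos (lexx _) nfT); exists u => yj.
  by rewrite inE => /asboolP.
exists x => w hw; apply: fintype.subset_trans (feas_act T x Hx).
apply/fintype.subsetP => yj Hyj; rewrite inE; apply/asboolP; by exists w.
Qed.

Local Open Scope classical_set_scope.

Lemma poly_unif {R : realType} {d : nat} {Y : finType} (L : vec R d -> Y -> R) :
  polyhedral L -> exists K (A : Y -> 'I_K.+1 -> vec R d) (B : Y -> 'I_K.+1 -> R),
  forall y u, (forall j, aff A B y j u <= L u y) /\ exists j, L u y = aff A B y j u.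
Proof.
move=> HP.
have [f Hf] := @choice Y {k : nat & (('I_k.+1 -> vec R d) * ('I_k.+1 -> R))%type}
  (fun y s => forall u : vec R d,
      (forall j, \sum_(i < d) (projT2 s).1 j i * u i + (projT2 s).2 j <= L u y) /\
      (exists j, L u y = \sum_(i < d) (projT2 s).1 j i * u i + (projT2 s).2 j))
  ltac:(move=> y; have [k [a [b H]]] := HP y; by exists (existT _ k (a, b))).
pose K := \max_y projT1 (f y).
have kK y : (projT1 (f y) <= K)%N by rewrite /K (bigD1 y) //= leq_maxl.
exists K, (fun y j => (projT2 (f y)).1 (inord j)), (fun y j => (projT2 (f y)).2 (inord j)).
move=> y u; have [H1 [j0 H2]] := Hf y u; split.
  by move=> j; rewrite /aff; apply: H1.
exists (inord j0); rewrite /aff H2.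
have -> : (inord (inord j0 : 'I_K.+1) : 'I_(projT1 (f y)).+1) = j0.
  have hj : (j0 < K.+1)%N by rewrite ltnS (leq_trans _ (kK y)) // -ltnS.
  have e : nat_of_ord (inord j0 : 'I_K.+1) = j0 := inordK hj.
  by apply: val_inj => /=; rewrite inordK e //.
by [].
Qed.

Theorem proposition8 (R : realType) (d : nat) (Y Rep : finType)
    (L : vec R d -> Y -> R) (gamma : (Y -> R) -> {set Rep}) :
  polyhedral L -> nonneg_loss L -> is_property gamma ->
  indirectly_elicits L gamma ->
  exists2 eps0 : R, 0 < eps0 &
    forall eps : R, 0 < eps -> eps <= eps0 -> produces_link L gamma eps.
Proof.
move=> HP _ _ HI.
have [K [A [B HL]]] := poly_unif L HP.
have [eps0 e0pos He0] := uniform_eps L A B HL.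
exists eps0 => // eps epos ele u.
have [us Hus] := He0 u.
have [r Hr] := HI us.
exists r => U [p [simp GU]] [w Uw hw] q [simq Gq].
apply: Hr; split => //.
apply: (@gamma_mono R d Y K L A B HL q (proj1 simq) w us).
  by rewrite Gq.
apply: Hus; exact: lt_le_trans ele.
Qed.
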